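(* Let $p,d\in C^{2}([0,\infty),\mathbb{R})$, $b\in C^2([0,\infty),\mathbb{C})$, $c\in C^1([0,\infty),\mathbb{C})$, $q\in C([0,\infty),\mathbb{R})$ with $p>0$ on $[0,\infty)$, and assume: (B1) the (possibly improper) limit $d_\infty:=\lim_{t\to\infty}d(t)\in\mathbb{R}\cup\{\pm\infty\}$ exists; (B2) there are $\beta,\gamma>0$ with $|b(t)|\le\beta(|d(t)|+1)$, $|c(t)|\le\gamma(|d(t)|+1)$ for all $t\ge0$; (C1) for $\lambda\in\mathbb{R}\setminus(\overline{\Delta([0,\infty))}\cup\{d_\infty\})$ the limits $\lim_{t\to\infty}\pi(t,\lambda)$ and $\lim_{t\to\infty}\frac{\partial}{\partial t}\pi(t,\lambda)$ exist and are finite, and $\lim_{t\to\infty}\pi(t,\lambda)\neq0$ for some such $\lambda$; (C2) for $\lambda\in\mathbb{R}\setminus\{d_\infty\}$ the limits $\lim_{t\to\infty}\frac{\overline{b}c}{d-\lambda}(t)$ and $\lim_{t\to\infty}\frac{\partial}{\partial t}\frac{\overline{b}c}{d-\lambda}(t)$ exist and are finite; (C3) for $\lambda\in\mathbb{R}\setminus\{d_\infty\}$ the limit $\lim_{t\to\infty}\big(q-\lambda-\frac{|c|^2}{d-\lambda}\big)(t)$ exists and is finite. Let $\sigma^{\mathrm s}:=\{\lambda\in\mathbb{R}\setminus(\overline{\Delta([0,\infty))}\cup\{d_\infty\}):\ (\lim_{t\to\infty}\frac{\rho(t,\lambda)}{\pi(t,\lambda)})^2-4\lim_{t\to\infty}\frac{\kappa(t,\lambda)}{\pi(t,\lambda)}\ge0\}$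 and $E:=\overline{\Delta([0,\infty))}\cup\{d_\infty\}$. Then there exist $s_-,s_+,s\in\mathbb{R}$ with $s_-\le s_+\le s$ such that: (i) if $d_\infty\in\mathbb{R}$: when $\lim_{t\to\infty}p(t)>0$, either $\sigma^{\mathrm s}=([s_-,s_+]\cup[s,+\infty))\setminus E$ or $\sigma^{\mathrm s}=[s,+\infty)\setminus E$; when $\lim_{t\to\infty}p(t)=0$, $\sigma^{\mathrm s}=((-\infty,s_-]\cup[s_+,+\infty))\setminus E$; (ii) if $d_\infty=+\infty$: $\sigma^{\mathrm s}=[s_-,s_+]\setminus\overline{\Delta([0,\infty))}$ if $\lim_{t\to\infty}\frac{|b|^2}{d^2}>0$; $\sigma^{\mathrm s}=[s,+\infty)\setminus\overline{\Delta([0,\infty))}$ if $\lim\frac{|b|^2}{d^2}=0$ and $\lim_{t\to\infty}(p-\frac{|b|^2}{d})>0$; $\sigma^{\mathrm s}=(-\infty,s]\setminus\overline{\Delta([0,\infty))}$ if $\lim\frac{|b|^2}{d^2}=0$ and $\lim_{t\to\infty}(p-\frac{|b|^2}{d})<0$; (iii) if $d_\infty=-\infty$: $\sigma^{\mathrm s}=[s_-,s_+]\setminus\overline{\Delta([0,\infty))}$ if $\lim_{t\to\infty}\frac{|b|^2}{d^2}>0$; $\sigma^{\mathrm s}=[s,+\infty)\setminus\overline{\Delta([0,\infty))}$ if $\lim_{t\to\infty}\frac{|b|^2}{d^2}=0$.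
   Context: Notation: $\Delta(t):=d(t)-|b(t)|^2/p(t)$. For $t$ with $d(t)\ne\lambda$: $\pi(t,\lambda):=p(t)-\frac{|b(t)|^2}{d(t)-\lambda}$, $\rho(t,\lambda):=-\frac{2\operatorname{Im}(b(t)\overline{c(t)})}{d(t)-\lambda}+i\frac{\partial}{\partial t}\pi(t,\lambda)$, $\kappa(t,\lambda):=q(t)-\lambda-\frac{|c(t)|^2}{d(t)-\lambda}+\frac{\partial}{\partial t}\Big(\frac{\overline{b(t)}c(t)}{d(t)-\lambda}\Big)$. The limits of $p$, $|b|^2/d^2$, $p-|b|^2/d$ appearing in the case distinctions exist in the respective cases under the hypotheses. The set $\sigma^{\mathrm s}$ is the singular part $\sigma^{\mathrm s}_{\mathrm{ess}}(\mathcal{A})$ of the essential spectrum of every closed symmetric extension $\mathcal{A}$ of the operator $\mathcal{A}_0$ in $L^2(0,\infty)^2$, $\mathcal{A}_0\binom{y_1}{y_2}=\binom{-(py_1')'+qy_1-(\overline{b}y_2)'+\overline{c}y_2}{by_1'+cy_1+dy_2}$ on $C_0^2((0,\infty))\oplus C_0^1((0,\infty))$. *)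

(* Defs.v *)
From Stdlib Require Import Reals.
From Coquelicot Require Import Coquelicot.
Open Scope R_scope.

Definition cont_half (f : R -> R) (t : R) : Prop :=
  filterlim f (within (fun u => 0 <= u) (locally t)) (locally (f t)).

Definition Ck_half (k : nat) (f : R -> R) : Prop :=
  exists F : nat -> R -> R,
    F 0%nat = f /\
    (forall i, (i <= k)%nat -> forall t, 0 <= t -> cont_half (F i) t) /\
    (forall i, (i < k)%nat -> forall t, 0 < t -> is_derive (F i) t (F (S i) t)).

Definition CCk_half (k : nat) (f : R -> C) : Prop :=
  Ck_half k (fun t => Re (f t)) /\ Ck_half k (fun t => Im (f t)).

Definition CDerive (f : R -> C) (t : R) : C :=
  (Derive (fun s => Re (f s)) t, Derive (fun s => Im (f s)) t).

Definition is_limC (f : R -> C) (l : C) : Prop :=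
  is_lim (fun t => Re (f t)) p_infty (Re l) /\
  is_lim (fun t => Im (f t)) p_infty (Im l).

Definition ex_limC (f : R -> C) : Prop := exists l, is_limC f l.

Section Coefficients.
Variables (p q d : R -> R) (b c : R -> C).

Definition Delta (t : R) : R := d t - (Cmod (b t))^2 / p t.

Definition in_clDelta (lam : R) : Prop :=
  forall eps, 0 < eps -> exists t, 0 <= t /\ Rabs (Delta t - lam) < eps.

Definition pi_f (t lam : R) : R := p t - (Cmod (b t))^2 / (d t - lam).

Definition bc_f (lam : R) (t : R) : C :=
  (Cconj (b t) * c t * RtoC (/ (d t - lam)))%C.

Definition rho_f (t lam : R) : C :=
  (- 2 * Im (b t * Cconj (c t))%C / (d t - lam),
   Derive (fun s => pi_f s lam) t).

Definition kappa_f (t lam : R) : C :=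
  (RtoC (q t - lam - (Cmod (c t))^2 / (d t - lam)) + CDerive (bc_f lam) t)%C.

Definition notE (dinf : Rbar) (lam : R) : Prop :=
  ~ in_clDelta lam /\ Finite lam <> dinf.

Definition sigma_s (dinf : Rbar) (lam : R) : Prop :=
  notE dinf lam /\
  exists r k : C,
    is_limC (fun t => (rho_f t lam / RtoC (pi_f t lam))%C) r /\
    is_limC (fun t => (kappa_f t lam / RtoC (pi_f t lam))%C) k /\
    Im (r * r - RtoC 4 * k)%C = 0 /\ 0 <= Re (r * r - RtoC 4 * k)%C.

End Coefficients.

(* Main.v *)
Require Import Defs.
From Stdlib Require Import Reals.
From Coquelicot Require Import Coquelicot.
From Stdlib Require Import Lra Lia Classical.
Open Scope R_scope.

Definition ev (P : R -> Prop) := Rbar_locally p_infty P.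
Definition LL (f : R -> R) (l : R) := is_lim f p_infty (Finite l).

Lemma ev_and P Q : ev P -> ev Q -> ev (fun t => P t /\ Q t).
Proof. intros [M1 H1] [M2 H2]. exists (Rmax M1 M2). intros x Hx.
split; [apply H1|apply H2]; pose proof (Rmax_l M1 M2); pose proof (Rmax_r M1 M2); lra. Qed.

Lemma ev_imp (P Q : R -> Prop) : (forall t, P t -> Q t) -> ev P -> ev Q.
Proof. intros H [M HM]. exists M. auto. Qed.

Lemma ev_gt a : ev (fun t => a < t).
Proof. exists a. auto. Qed.

Lemma ev_ex P : ev P -> forall a, exists t, a <= t /\ P t.
Proof. intros [M HM] a. exists (Rmax a (M+1)). split. apply Rmax_l.
apply HM. pose proof (Rmax_r a (M+1)). lra. Qed.

Lemma LL_ext f g l : ev (fun t => f t = g t) -> LL f l -> LL g l.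
Proof. intros. eapply is_lim_ext_loc; eauto. Qed.

Lemma LL_uniq f a b : LL f a -> LL f b -> a = b.
Proof. unfold LL. intros H1 H2. apply is_lim_unique in H1. apply is_lim_unique in H2.
rewrite H1 in H2. congruence. Qed.

Lemma LL_const a : LL (fun _ => a) a.
Proof. apply is_lim_const. Qed.

Lemma LL_plus f g a b : LL f a -> LL g b -> LL (fun t => f t + g t) (a + b).
Proof. apply is_lim_plus'. Qed.

Lemma LL_minus f g a b : LL f a -> LL g b -> LL (fun t => f t - g t) (a - b).
Proof. apply is_lim_minus'. Qed.

Lemma LL_mult f g a b : LL f a -> LL g b -> LL (fun t => f t * g t) (a * b).
Proof. intros H1 H2. pose proof (is_lim_mult f g p_infty a b H1 H2 I). exact H. Qed.

Lemma LL_inv f a : LL f a -> a <> 0 -> LL (fun t => / f t) (/ a).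
Proof. intros H1 H2. apply (is_lim_inv f p_infty a H1). congruence. Qed.

Lemma LL_div f g a b : LL f a -> LL g b -> b <> 0 -> LL (fun t => f t / g t) (a / b).
Proof. intros. unfold Rdiv. apply LL_mult; auto. apply LL_inv; auto. Qed.

Lemma LL_opp f a : LL f a -> LL (fun t => - f t) (- a).
Proof. intros H. apply (is_lim_opp f p_infty a H). Qed.

Lemma LL_scal f k a : LL f a -> LL (fun t => k * f t) (k * a).
Proof. intros. apply LL_mult; auto. apply LL_const. Qed.

Lemma LL_ev_neq f a : LL f a -> a <> 0 -> ev (fun t => f t <> 0).
Proof. intros H Ha. unfold LL, is_lim in H.
assert (He : 0 < Rabs a) by (apply Rabs_pos_lt; auto).
specialize (H (fun y => Rabs (y - a) < Rabs a)). simpl in H.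
apply (ev_imp (fun t => Rabs (f t - a) < Rabs a)).
- intros t Ht Hf. rewrite Hf in Ht. rewrite Rminus_0_l, Rabs_Ropp in Ht. lra.
- apply H. exists (mkposreal _ He). intros y Hy. exact Hy. Qed.

Lemma LL_ev_lt f a b : LL f a -> b < a -> ev (fun t => b < f t).
Proof. intros H Ha. unfold LL, is_lim in H.
assert (He : 0 < a - b) by lra.
specialize (H (fun y => Rabs (y - a) < a - b)). simpl in H.
apply (ev_imp (fun t => Rabs (f t - a) < a - b)).
- intros t Ht. apply Rabs_def2 in Ht. lra.
- apply H. exists (mkposreal _ He). intros y Hy. exact Hy. Qed.

Lemma LL_ev_gt f a b : LL f a -> a < b -> ev (fun t => f t < b).
Proof. intros H Ha. apply LL_opp in H. apply (LL_ev_lt _ _ (-b)) in H; [|lra].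
eapply ev_imp; [|exact H]. simpl. intros; lra. Qed.

Lemma LL_le f a : ev (fun t => 0 <= f t) -> LL f a -> 0 <= a.
Proof. intros H1 H2. destruct (Rle_or_lt 0 a); auto.
apply (LL_ev_gt _ _ 0) in H2; auto. destruct (ev_ex _ (ev_and _ _ H1 H2) 0) as [t [_ [A B]]]. lra. Qed.

Lemma LL_small f : LL f 0 -> forall eps, 0 < eps -> ev (fun t => Rabs (f t) < eps).
Proof. intros H eps He. apply (ev_imp (fun t => -eps < f t /\ f t < eps)).
intros t [A B]. apply Rabs_def1; auto. apply ev_and.
apply (LL_ev_lt _ 0); auto. lra. apply (LL_ev_gt _ 0); auto. Qed.

Definition infty (l : Rbar) := l = p_infty \/ l = m_infty.

Lemma inf_inv d l b : is_lim d p_infty l -> infty l -> LL (fun t => / (d t - b)) 0.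
Proof. intros H Hl. unfold LL.
assert (H2 : is_lim (fun t => d t - b) p_infty l).
{ apply (is_lim_minus d (fun _ => b) p_infty l b l); auto. apply is_lim_const.
  destruct Hl; subst; reflexivity. }
apply is_lim_inv in H2. destruct Hl; subst; exact H2. destruct Hl; subst; discriminate. Qed.

Lemma inf_neq d l b : is_lim d p_infty l -> infty l -> ev (fun t => d t - b <> 0).
Proof. intros H Hl. destruct Hl; subst.
- specialize (H (fun y => b + 1 < y)). simpl in H.
  eapply ev_imp; [| apply H; exists (b+1); auto]. intros; simpl in *; lra.
- specialize (H (fun y => y < b - 1)). simpl in H.
  eapply ev_imp; [| apply H; exists (b-1); auto]. intros; simpl in *; lra. Qed.

Lemma inf_ratio d l a b : is_lim d p_infty l -> infty l ->
  LL (fun t => (d t - a) / (d t - b)) 1.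
Proof. intros H Hl. apply (LL_ext (fun t => 1 + (b - a) * / (d t - b))).
- eapply ev_imp; [| apply (inf_neq d l b); auto]. intros t Ht. simpl. field. auto.
- assert (H1 : LL (fun t => 1 + (b - a) * / (d t - b)) (1 + (b-a) * 0)).
  { apply LL_plus. apply LL_const. apply LL_scal. eapply inf_inv; eauto. }
  replace (1 + (b-a) * 0) with 1 in H1 by ring. exact H1. Qed.

Lemma fin_neq d r b : is_lim d p_infty (Finite r) -> b <> r -> ev (fun t => d t - b <> 0).
Proof. intros H Hb. apply (LL_ev_neq _ (r - b)). apply LL_minus; auto. apply LL_const. lra. Qed.

Lemma inf_sign d l a b : is_lim d p_infty l -> infty l -> ev (fun t => 0 < (d t - a) * (d t - b)).
Proof. intros H Hl. destruct Hl; subst.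
- specialize (H (fun y => Rmax a b + 1 < y)). simpl in H.
  eapply ev_imp; [| apply H; exists (Rmax a b + 1); auto]. intros t Ht; simpl in *.
  pose proof (Rmax_l a b); pose proof (Rmax_r a b). apply Rmult_lt_0_compat; lra.
- specialize (H (fun y => y < Rmin a b - 1)). simpl in H.
  eapply ev_imp; [| apply H; exists (Rmin a b - 1); auto]. intros t Ht; simpl in *.
  pose proof (Rmin_l a b); pose proof (Rmin_r a b).
  replace ((d t - a) * (d t - b)) with ((a - d t) * (b - d t)) by ring. apply Rmult_lt_0_compat; lra. Qed.


Lemma LL_eq f a b : LL f a -> a = b -> LL f b.
Proof. intros H E; subst; auto. Qed.

Lemma deriv_lim0 f T l m : (forall t, T < t -> ex_derive f t) ->
  LL f l -> LL (Derive f) m -> m = 0.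
Proof. intros Hd Hf Hm. destruct (Req_dec m 0) as [|Hne]; auto. exfalso.
assert (Ha : 0 < Rabs m) by (apply Rabs_pos_lt; auto).
assert (H1 : LL (fun t => f t - l) 0) by (apply (LL_eq _ (l - l)); [apply LL_minus; auto; apply LL_const| ring]).
assert (H2 : LL (fun t => Derive f t - m) 0) by (apply (LL_eq _ (m - m)); [apply LL_minus; auto; apply LL_const| ring]).
destruct (LL_small _ H1 (Rabs m / 4)) as [M1 HM1]; [lra|].
destruct (LL_small _ H2 (Rabs m / 2)) as [M2 HM2]; [lra|].
set (t := Rmax T (Rmax M1 M2) + 1).
assert (Tt : T < t) by (unfold t; pose proof (Rmax_l T (Rmax M1 M2)); lra).
assert (M1t : M1 < t) by (unfold t; pose proof (Rmax_r T (Rmax M1 M2)); pose proof (Rmax_l M1 M2); lra).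
assert (M2t : M2 < t) by (unfold t; pose proof (Rmax_r T (Rmax M1 M2)); pose proof (Rmax_r M1 M2); lra).
destruct (MVT_gen f t (t+1) (Derive f)) as [xi [Hxi E]].
- intros x Hx. rewrite Rmin_left in Hx by lra. rewrite Rmax_right in Hx by lra.
  apply Derive_correct. apply Hd. lra.
- intros x Hx. rewrite Rmin_left in Hx by lra. rewrite Rmax_right in Hx by lra.
  apply continuity_pt_filterlim. apply (@ex_derive_continuous R_AbsRing R_NormedModule). apply Hd. lra.
- rewrite Rmin_left in Hxi by lra. rewrite Rmax_right in Hxi by lra.
  replace (t + 1 - t) with 1 in E by ring. rewrite Rmult_1_r in E.
  pose proof (HM1 t M1t). pose proof (HM1 (t+1) ltac:(lra)). pose proof (HM2 xi ltac:(lra)).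
  assert (Rabs (Derive f xi) < Rabs m / 2).
  { rewrite <- E. replace (f (t+1) - f t) with ((f (t+1) - l) - (f t - l)) by ring.
    eapply Rle_lt_trans. apply Rabs_triang. rewrite Rabs_Ropp. lra. }
  assert (Rabs m <= Rabs (Derive f xi) + Rabs (Derive f xi - m)).
  { replace m with (Derive f xi - (Derive f xi - m)) at 1 by ring.
    eapply Rle_trans. apply Rabs_triang. rewrite Rabs_Ropp. lra. }
  lra. Qed.

Lemma cubic_sorted a b c x : a <= b <= c ->
  (0 <= (x - a) * (x - b) * (x - c) <-> (a <= x <= b \/ c <= x)).
Proof. intros H. split.
- intros Hp. destruct (Rle_or_lt c x) as [Hc|Hc]; [right; lra|].
  destruct (Rle_or_lt a x) as [Ha|Ha]; destruct (Rle_or_lt x b) as [Hb|Hb]; try (left; lra); exfalso.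
  + assert (0 < (x-a)*(x-b)) by (apply Rmult_lt_0_compat; lra).
    assert ((x - a) * (x - b) * (x - c) < 0). { apply Rmult_lt_reg_r with (/ ((x-a)*(x-b))). apply Rinv_0_lt_compat; auto.
    rewrite Rmult_0_l. replace ((x - a) * (x - b) * (x - c) * / ((x - a) * (x - b))) with (x - c) by (field; lra). lra. } lra.
  + assert (0 < (x-a)*(x-b)) by (replace ((x-a)*(x-b)) with ((a-x)*(b-x)) by ring; apply Rmult_lt_0_compat; lra).
    assert ((x - a) * (x - b) * (x - c) < 0). { apply Rmult_lt_reg_r with (/ ((x-a)*(x-b))). apply Rinv_0_lt_compat; auto.
    rewrite Rmult_0_l. replace ((x - a) * (x - b) * (x - c) * / ((x - a) * (x - b))) with (x - c) by (field; lra). lra. } lra.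
- intros [[H1 H2]|H3].
  + replace ((x - a) * (x - b) * (x - c)) with ((x - a) * ((b - x) * (c - x))) by ring.
    apply Rmult_le_pos; [lra|]. apply Rmult_le_pos; lra.
  + apply Rmult_le_pos; [apply Rmult_le_pos|]; lra. Qed.

Lemma cubic_any a b c x : (exists sm sp s, sm <= sp <= s /\
  (0 <= (x - a) * (x - b) * (x - c) <-> (sm <= x <= sp \/ s <= x))).
Abort.

Lemma sqrt_sq_eq d : 0 <= d -> sqrt d * sqrt d = d.
Proof. apply sqrt_sqrt. Qed.

Lemma quad_fact a b c : a <> 0 -> 0 <= b * b - 4 * a * c ->
  let u := (- b - sqrt (b*b - 4*a*c)) / (2 * a) in
  let v := (- b + sqrt (b*b - 4*a*c)) / (2 * a) in
  forall x, a * x * x + b * x + c = a * (x - u) * (x - v).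
Proof. intros Ha Hd u v x. unfold u, v.
pose proof (sqrt_sqrt _ Hd). set (s := sqrt (b*b - 4*a*c)) in *.
field_simplify; auto. replace (s ^ 2) with (s * s) by ring. rewrite H. field. auto. Qed.

Lemma quad_neg_disc a b c x : 0 < a -> b * b - 4 * a * c < 0 -> 0 < a * x * x + b * x + c.
Proof. intros Ha Hd.
assert (a * (a * x * x + b * x + c) * 4 = (2 * a * x + b) ^ 2 + (4 * a * c - b * b)) by ring.
assert (0 < a * (a * x * x + b * x + c)). { apply Rmult_lt_reg_r with 4. lra. rewrite Rmult_0_l, H.
  pose proof (pow2_ge_0 (2 * a * x + b)). lra. }
apply Rmult_lt_reg_l with a; auto. lra. Qed.

Lemma pos_mult_le a P : 0 < a -> (0 <= a * P <-> 0 <= P).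
Proof. intros Ha; split; intros H.
- destruct (Rle_or_lt 0 P); auto. assert (a * P < 0). { rewrite <- (Rmult_0_r a). apply Rmult_lt_compat_l; auto. } lra.
- apply Rmult_le_pos; lra. Qed.

Lemma quad_pos_set a b c : 0 < a -> exists sm sp, sm <= sp /\
  forall x, (0 <= a * x * x + b * x + c <-> (x <= sm \/ sp <= x)).
Proof. intros Ha. destruct (Rlt_or_le (b*b - 4*a*c) 0) as [Hd|Hd].
- exists 0, 0. split; [lra|]. intros x. pose proof (quad_neg_disc a b c x Ha Hd). split; intros; lra.
- pose proof (quad_fact a b c ltac:(lra) Hd) as F. simpl in F.
  set (u := (- b - sqrt (b*b - 4*a*c)) / (2 * a)) in *.
  set (v := (- b + sqrt (b*b - 4*a*c)) / (2 * a)) in *.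
  assert (Huv : u <= v). { unfold u, v. unfold Rdiv. apply Rmult_le_compat_r.
    left; apply Rinv_0_lt_compat; lra. pose proof (sqrt_pos (b*b - 4*a*c)). lra. }
  exists u, v. split; auto. intros x. rewrite F. rewrite Rmult_assoc, pos_mult_le by auto.
  split.
  + intros H. destruct (Rle_or_lt x u); auto. destruct (Rle_or_lt v x); auto. exfalso.
    assert ((x - u) * (v - x) > 0) by (apply Rmult_lt_0_compat; lra). nra.
  + intros [H|H].
    * replace ((x - u) * (x - v)) with ((u - x) * (v - x)) by ring. apply Rmult_le_pos; lra.
    * apply Rmult_le_pos; lra. Qed.

Lemma quad_neg_set a b c : a < 0 -> (exists sm sp, sm <= sp /\
  forall x, (0 <= a * x * x + b * x + c <-> (sm <= x <= sp))) \/
  (forall x, a * x * x + b * x + c < 0).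
Proof. intros Ha. destruct (Rlt_or_le (b*b - 4*a*c) 0) as [Hd|Hd].
- right. intros x. pose proof (quad_neg_disc (-a) (-b) (-c) x ltac:(lra) ltac:(lra)). lra.
- left. pose proof (quad_fact (-a) (-b) (-c) ltac:(lra) ltac:(lra)) as F. simpl in F.
  set (u := (- -b - sqrt (-b*-b - 4*-a*-c)) / (2 * -a)) in *.
  set (v := (- -b + sqrt (-b*-b - 4*-a*-c)) / (2 * -a)) in *.
  assert (Huv : u <= v). { unfold u, v. unfold Rdiv. apply Rmult_le_compat_r.
    left; apply Rinv_0_lt_compat; lra. pose proof (sqrt_pos (-b*-b - 4*-a*-c)). lra. }
  exists u, v. split; auto. intros x.
  assert (E : a * x * x + b * x + c = (-a) * ((x - u) * (v - x))).
  { specialize (F x). replace (a * x * x + b * x + c) with (- (-a * x * x + -b * x + -c)) by ring.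
    rewrite F. ring. }
  rewrite E, pos_mult_le by lra. split.
  + intros H. destruct (Rle_or_lt u x); destruct (Rle_or_lt x v); try lra; exfalso.
    * assert ((x - u) * (x - v) > 0) by (apply Rmult_lt_0_compat; lra). nra.
    * assert ((u - x) * (v - x) > 0) by (apply Rmult_lt_0_compat; lra). nra.
  + intros [H1 H2]. apply Rmult_le_pos; lra. Qed.

Lemma poly_cont a3 a2 a1 a0 : continuity (fun x => a3 * x^3 + a2 * x^2 + a1 * x + a0).
Proof. intros y. apply continuity_pt_filterlim.
apply (@ex_derive_continuous R_AbsRing R_NormedModule (fun x => a3 * x^3 + a2 * x^2 + a1 * x + a0)).
auto_derive. auto. Qed.

Lemma bound_aux b2 b1 b0 y : 1 + Rabs b2 + Rabs b1 + Rabs b0 <= y ->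
  Rabs (b2 * y^2 + b1 * y + b0) < y^3.
Proof. intros H. pose proof (Rabs_pos b2); pose proof (Rabs_pos b1); pose proof (Rabs_pos b0).
assert (Hy : 1 <= y) by lra.
assert (A : Rabs (b2 * y^2 + b1 * y + b0) <= Rabs b2 * y^2 + Rabs b1 * y^2 + Rabs b0 * y^2).
{ eapply Rle_trans. apply Rabs_triang. eapply Rle_trans. apply Rplus_le_compat_r. apply Rabs_triang.
  rewrite !Rabs_mult. rewrite (Rabs_right (y^2)) by (apply Rle_ge; apply pow_le; lra).
  rewrite (Rabs_right y) by lra.
  apply Rplus_le_compat. apply Rplus_le_compat_l. apply Rmult_le_compat_l; auto. nra.
  rewrite <- (Rmult_1_r (Rabs b0)) at 1. apply Rmult_le_compat_l; auto. nra. }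
assert (B : (1 + Rabs b2 + Rabs b1 + Rabs b0) * y^2 <= y^3).
{ replace (y^3) with (y * y^2) by ring. apply Rmult_le_compat_r; auto. apply pow_le; lra. }
assert (0 < y^2) by (apply pow_lt; lra). nra. Qed.

Lemma cubic_root a3 a2 a1 a0 : 0 < a3 -> exists r, a3 * r^3 + a2 * r^2 + a1 * r + a0 = 0.
Proof. intros Ha.
set (b2 := a2 / a3). set (b1 := a1 / a3). set (b0 := a0 / a3).
set (M := 1 + Rabs b2 + Rabs b1 + Rabs b0).
assert (HM : 1 <= M) by (unfold M; pose proof (Rabs_pos b2); pose proof (Rabs_pos b1); pose proof (Rabs_pos b0); lra).
assert (E : forall x, a3 * x^3 + a2 * x^2 + a1 * x + a0 = a3 * (x^3 + (b2 * x^2 + b1 * x + b0))).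
{ intros x. unfold b2, b1, b0. field. lra. }
destruct (IVT (fun x => a3 * x^3 + a2 * x^2 + a1 * x + a0) (-M) M) as [r [_ Hr]].
- apply poly_cont.
- lra.
- rewrite E. assert (Rabs (b2 * (-M)^2 + b1 * (-M) + b0) < M^3).
  { pose proof (bound_aux b2 (-b1) b0 M ltac:(unfold M; rewrite Rabs_Ropp; lra)).
    replace (b2 * (-M)^2 + b1 * (-M) + b0) with (b2 * M^2 + - b1 * M + b0) by ring. auto. }
  apply Rabs_def2 in H. replace ((-M)^3) with (- M^3) by ring.
  assert (- M ^ 3 + (b2 * (- M) ^ 2 + b1 * - M + b0) < 0) by lra.
  rewrite <- (Rmult_0_r a3). apply Rmult_lt_compat_l; auto.
- rewrite E. pose proof (bound_aux b2 b1 b0 M ltac:(unfold M; lra)). apply Rabs_def2 in H.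
  apply Rmult_lt_0_compat; auto. lra.
- exists r. exact Hr. Qed.

Lemma cubic_set a3 a2 a1 a0 : 0 < a3 -> exists sm sp s, sm <= sp <= s /\
  forall x, (0 <= a3 * x^3 + a2 * x^2 + a1 * x + a0 <-> (sm <= x <= sp \/ s <= x)).
Proof. intros Ha. destruct (cubic_root a3 a2 a1 a0 Ha) as [r Hr].
set (c1 := a2 + a3 * r). set (c0 := a1 + r * c1).
assert (F : forall x, a3 * x^3 + a2 * x^2 + a1 * x + a0 = (x - r) * (a3 * x * x + c1 * x + c0)).
{ intros x. unfold c0, c1. assert (E : a0 = - (a3 * r^3 + a2 * r^2 + a1 * r)) by lra. rewrite E. ring. }
destruct (Rlt_or_le (c1*c1 - 4*a3*c0) 0) as [Hd|Hd].
- exists r, r, r. split; [lra|]. intros x. rewrite F.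
  pose proof (quad_neg_disc a3 c1 c0 x Ha Hd).
  rewrite Rmult_comm, pos_mult_le by auto. lra.
- pose proof (quad_fact a3 c1 c0 ltac:(lra) Hd) as G. simpl in G.
  set (u := (- c1 - sqrt (c1*c1 - 4*a3*c0)) / (2 * a3)) in *.
  set (v := (- c1 + sqrt (c1*c1 - 4*a3*c0)) / (2 * a3)) in *.
  assert (Huv : u <= v). { unfold u, v. unfold Rdiv. apply Rmult_le_compat_r.
    left; apply Rinv_0_lt_compat; lra. pose proof (sqrt_pos (c1*c1 - 4*a3*c0)). lra. }
  assert (F2 : forall x, a3 * x^3 + a2 * x^2 + a1 * x + a0 = a3 * ((x - r) * (x - u) * (x - v))).
  { intros x. rewrite F, G. ring. }
  destruct (Rle_or_lt r u) as [H1|H1].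
  + exists r, u, v. split; [lra|]. intros x. rewrite F2, pos_mult_le by auto. apply cubic_sorted. lra.
  + destruct (Rle_or_lt r v) as [H2|H2].
    * exists u, r, v. split; [lra|]. intros x. rewrite F2, pos_mult_le by auto.
      replace ((x - r) * (x - u) * (x - v)) with ((x - u) * (x - r) * (x - v)) by ring. apply cubic_sorted. lra.
    * exists u, v, r. split; [lra|]. intros x. rewrite F2, pos_mult_le by auto.
      replace ((x - r) * (x - u) * (x - v)) with ((x - u) * (x - v) * (x - r)) by ring. apply cubic_sorted. lra. Qed.


Lemma Cdiv_R (z : C) x : x <> 0 -> (z / RtoC x)%C = (Re z / x, Im z / x).
Proof. intros Hx. destruct z as [z1 z2]. unfold Cdiv, Cinv, Cmult, RtoC, Re, Im. simpl.
f_equal; field; auto. Qed.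

Lemma core (pp : R -> R) (rh ka : R -> C) a al k1 :
  LL pp a -> a <> 0 ->
  LL (fun t => Re (rh t)) al -> LL (fun t => Im (rh t)) 0 ->
  LL (fun t => Re (ka t)) k1 -> LL (fun t => Im (ka t)) 0 ->
  ((exists r k : C, is_limC (fun t => (rh t / RtoC (pp t))%C) r /\
      is_limC (fun t => (ka t / RtoC (pp t))%C) k /\
      Im (r * r - RtoC 4 * k)%C = 0 /\ 0 <= Re (r * r - RtoC 4 * k)%C)
   <-> 0 <= al * al - 4 * k1 * a).
Proof. intros Hp Ha H1 H2 H3 H4.
assert (Hne := LL_ev_neq _ _ Hp Ha).
assert (A1 : LL (fun t => Re (rh t / RtoC (pp t))%C) (al / a)).
{ apply (LL_ext (fun t => Re (rh t) / pp t)). eapply ev_imp; [|exact Hne]. intros t Ht. rewrite Cdiv_R; auto.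
  apply LL_div; auto. }
assert (A2 : LL (fun t => Im (rh t / RtoC (pp t))%C) (0 / a)).
{ apply (LL_ext (fun t => Im (rh t) / pp t)). eapply ev_imp; [|exact Hne]. intros t Ht. rewrite Cdiv_R; auto.
  apply LL_div; auto. }
assert (A3 : LL (fun t => Re (ka t / RtoC (pp t))%C) (k1 / a)).
{ apply (LL_ext (fun t => Re (ka t) / pp t)). eapply ev_imp; [|exact Hne]. intros t Ht. rewrite Cdiv_R; auto.
  apply LL_div; auto. }
assert (A4 : LL (fun t => Im (ka t / RtoC (pp t))%C) (0 / a)).
{ apply (LL_ext (fun t => Im (ka t) / pp t)). eapply ev_imp; [|exact Hne]. intros t Ht. rewrite Cdiv_R; auto.
  apply LL_div; auto. }
assert (Ea : 0 < a * a) by (apply Rsqr_pos_lt; auto).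
assert (Key : 0 <= (al/a)*(al/a) - 4 * (k1/a) <-> 0 <= al * al - 4 * k1 * a).
{ replace (al * al - 4 * k1 * a) with ((a*a) * ((al/a)*(al/a) - 4 * (k1/a))) by (field; auto).
  rewrite pos_mult_le; auto. reflexivity. }
split.
- intros [r [k [[R1 R2] [[K1 K2] [_ Hre]]]]].
  pose proof (LL_uniq _ _ _ A1 R1). pose proof (LL_uniq _ _ _ A2 R2).
  pose proof (LL_uniq _ _ _ A3 K1). pose proof (LL_uniq _ _ _ A4 K2).
  destruct r as [r1 r2]; destruct k as [k1' k2']. simpl in *. apply Key.
  replace (0/a) with 0 in * by (field; auto). subst. lra.
- intros H. exists (al/a, 0), (k1/a, 0). split; [|split; [|split]].
  + split. exact A1. apply (LL_eq _ (0/a)); [exact A2| simpl; unfold Rdiv; ring].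
  + split. exact A3. apply (LL_eq _ (0/a)); [exact A4| simpl; unfold Rdiv; ring].
  + simpl. ring.
  + simpl. apply Key in H. lra.
Qed.


Lemma Ck_der k f : Ck_half (S k) f -> forall t, 0 < t -> ex_derive f t.
Proof. intros [F [H0 [_ H2]]] t Ht. subst. exists (F 1%nat t). apply H2; auto. lia. Qed.

Lemma Cmod2 (z : C) : Cmod z ^ 2 = Re z ^ 2 + Im z ^ 2.
Proof. unfold Cmod. rewrite pow2_sqrt; auto. unfold Re, Im.
pose proof (pow2_ge_0 (fst z)); pose proof (pow2_ge_0 (snd z)); lra. Qed.

Lemma aux_der1 (p d f g : R -> R) lam t : ex_derive p t -> ex_derive d t ->
  ex_derive f t -> ex_derive g t -> d t - lam <> 0 ->
  ex_derive (fun s => p s - (f s ^ 2 + g s ^ 2) / (d s - lam)) t.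
Proof. intros. auto_derive. repeat split; auto. Qed.

Lemma aux_der2 (d f1 f2 g1 g2 : R -> R) lam t : ex_derive d t ->
  ex_derive f1 t -> ex_derive f2 t -> ex_derive g1 t -> ex_derive g2 t -> d t - lam <> 0 ->
  ex_derive (fun s => (f1 s * g1 s + f2 s * g2 s) * / (d s - lam)) t.
Proof. intros. auto_derive. repeat split; auto. Qed.

Lemma aux_der3 (d f1 f2 g1 g2 : R -> R) lam t : ex_derive d t ->
  ex_derive f1 t -> ex_derive f2 t -> ex_derive g1 t -> ex_derive g2 t -> d t - lam <> 0 ->
  ex_derive (fun s => (f1 s * g2 s - f2 s * g1 s) * / (d s - lam)) t.
Proof. intros. auto_derive. repeat split; auto. Qed.

Lemma pi_der (p d : R -> R) (b : R -> C) lam t : ex_derive p t -> ex_derive d t ->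
  ex_derive (fun s => Re (b s)) t -> ex_derive (fun s => Im (b s)) t -> d t - lam <> 0 ->
  ex_derive (fun s => pi_f p d b s lam) t.
Proof. intros. apply (ex_derive_ext (fun s => p s - (Re (b s) ^ 2 + Im (b s) ^ 2) / (d s - lam))).
intros s. unfold pi_f. rewrite Cmod2. reflexivity.
apply (aux_der1 p d (fun s => Re (b s)) (fun s => Im (b s))); auto. Qed.

Lemma bc_re (d : R -> R) (b c : R -> C) lam s : Re (bc_f d b c lam s) =
  (Re (b s) * Re (c s) + Im (b s) * Im (c s)) * / (d s - lam).
Proof. unfold bc_f, Cconj, Cmult, RtoC, Re, Im. simpl. ring. Qed.

Lemma bc_im (d : R -> R) (b c : R -> C) lam s : Im (bc_f d b c lam s) =
  (Re (b s) * Im (c s) - Im (b s) * Re (c s)) * / (d s - lam).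
Proof. unfold bc_f, Cconj, Cmult, RtoC, Re, Im. simpl. ring. Qed.

Lemma Y_im (b c : R -> C) s : Im (b s * Cconj (c s))%C = Im (b s) * Re (c s) - Re (b s) * Im (c s).
Proof. unfold Cconj, Cmult, Re, Im. simpl. ring. Qed.

Lemma bc_re_der (d : R -> R) (b c : R -> C) lam t : ex_derive d t ->
  ex_derive (fun s => Re (b s)) t -> ex_derive (fun s => Im (b s)) t ->
  ex_derive (fun s => Re (c s)) t -> ex_derive (fun s => Im (c s)) t -> d t - lam <> 0 ->
  ex_derive (fun s => Re (bc_f d b c lam s)) t.
Proof. intros. apply (ex_derive_ext (fun s => (Re (b s) * Re (c s) + Im (b s) * Im (c s)) * / (d s - lam))).
intros s. rewrite bc_re. reflexivity.
apply (aux_der2 d (fun s => Re (b s)) (fun s => Im (b s)) (fun s => Re (c s)) (fun s => Im (c s))); auto. Qed.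

Lemma bc_im_der (d : R -> R) (b c : R -> C) lam t : ex_derive d t ->
  ex_derive (fun s => Re (b s)) t -> ex_derive (fun s => Im (b s)) t ->
  ex_derive (fun s => Re (c s)) t -> ex_derive (fun s => Im (c s)) t -> d t - lam <> 0 ->
  ex_derive (fun s => Im (bc_f d b c lam s)) t.
Proof. intros. apply (ex_derive_ext (fun s => (Re (b s) * Im (c s) - Im (b s) * Re (c s)) * / (d s - lam))).
intros s. rewrite bc_im. reflexivity.
apply (aux_der3 d (fun s => Re (b s)) (fun s => Im (b s)) (fun s => Re (c s)) (fun s => Im (c s))); auto. Qed.

Lemma ev_thr (P : R -> Prop) : ev P -> exists T, 0 <= T /\ forall t, T < t -> P t.
Proof. intros [M HM]. exists (Rmax 0 M). split. apply Rmax_l. intros t Ht. apply HM.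
pose proof (Rmax_r 0 M). lra. Qed.

Lemma sigma_char (p d q : R -> R) (b c : R -> C) dinf lam a al k1 :
  Ck_half 2 p -> Ck_half 2 d -> CCk_half 2 b -> CCk_half 1 c ->
  (forall lam, notE p d b dinf lam ->
     ex_finite_lim (fun t => pi_f p d b t lam) p_infty /\
     ex_finite_lim (fun t => Derive (fun s => pi_f p d b s lam) t) p_infty) ->
  (forall lam, Finite lam <> dinf ->
     ex_limC (bc_f d b c lam) /\
     ex_limC (fun t => CDerive (bc_f d b c lam) t)) ->
  notE p d b dinf lam ->
  ev (fun t => d t - lam <> 0) ->
  LL (fun t => pi_f p d b t lam) a -> a <> 0 ->
  LL (fun t => - 2 * Im (b t * Cconj (c t))%C / (d t - lam)) al ->
  LL (fun t => q t - lam - (Cmod (c t))^2 / (d t - lam)) k1 ->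
  (sigma_s p q d b c dinf lam <-> 0 <= al * al - 4 * k1 * a).
Proof. intros Hp Hd [Hb1 Hb2] [Hc1 Hc2] C1 C2 HnE Hev Hpi Ha Hal Hk1.
destruct (ev_thr _ Hev) as [T [HT0 HT]].
assert (Dp : forall t, T < t -> ex_derive p t) by (intros; eapply Ck_der; eauto; lra).
assert (Dd : forall t, T < t -> ex_derive d t) by (intros; eapply Ck_der; eauto; lra).
assert (Db1 : forall t, T < t -> ex_derive (fun s => Re (b s)) t) by (intros; eapply Ck_der; eauto; lra).
assert (Db2 : forall t, T < t -> ex_derive (fun s => Im (b s)) t) by (intros; eapply Ck_der; eauto; lra).
assert (Dc1 : forall t, T < t -> ex_derive (fun s => Re (c s)) t) by (intros; eapply Ck_der; eauto; lra).
assert (Dc2 : forall t, T < t -> ex_derive (fun s => Im (c s)) t) by (intros; eapply Ck_der; eauto; lra).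
destruct (C1 lam HnE) as [_ [m Hm]].
assert (Hm0 : m = 0).
{ apply (deriv_lim0 (fun s => pi_f p d b s lam) T a); auto. intros t Ht. apply pi_der; auto. }
subst m.
destruct (C2 lam (proj2 HnE)) as [[w [Hw1 Hw2]] [w' [Hw1' Hw2']]].
assert (E1 : Re w' = 0).
{ apply (deriv_lim0 (fun s => Re (bc_f d b c lam s)) T (Re w)); auto. intros t Ht. apply bc_re_der; auto. }
assert (E2 : Im w' = 0).
{ apply (deriv_lim0 (fun s => Im (bc_f d b c lam s)) T (Im w)); auto. intros t Ht. apply bc_im_der; auto. }
unfold sigma_s. split.
- intros [_ H]. revert H. apply core with (pp := fun t => pi_f p d b t lam); auto.
  + apply (LL_eq _ (k1 + Re w')). apply LL_plus; auto. rewrite E1; ring.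
  + apply (LL_eq _ (0 + Im w')). apply LL_plus; auto. apply LL_const. rewrite E2; ring.
- intros H. split; auto. revert H. apply core with (pp := fun t => pi_f p d b t lam); auto.
  + apply (LL_eq _ (k1 + Re w')). apply LL_plus; auto. rewrite E1; ring.
  + apply (LL_eq _ (0 + Im w')). apply LL_plus; auto. apply LL_const. rewrite E2; ring.
Qed.


Ltac lstep := first [match goal with H : _ |- _ => exact H end | apply LL_const | apply LL_plus | apply LL_minus | apply LL_div
  | apply LL_mult | apply LL_opp | apply LL_inv].
Ltac neq := solve [lra | intro; match goal with H : ?a <> ?b |- _ => apply H; lra end].
Ltac lim := eapply LL_eq; [repeat lstep|].

Lemma lim_uniqR f (l : Rbar) a : is_lim f p_infty l -> LL f a -> l = Finite a.
Proof. intros H1 H2. apply is_lim_unique in H1. apply is_lim_unique in H2. congruence. Qed.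

Lemma notclD_eps (p d : R -> R) (b : R -> C) lam : ~ in_clDelta p d b lam ->
  exists eps, 0 < eps /\ forall t, 0 <= t -> eps <= Rabs (Defs.Delta p d b t - lam).
Proof. intros H. apply NNPP. intros H2. apply H. intros eps He. apply NNPP. intros H3.
apply H2. exists eps. split; auto. intros t Ht. destruct (Rle_or_lt eps (Rabs (Defs.Delta p d b t - lam))); auto.
exfalso. apply H3. exists t. auto. Qed.

Lemma notE_two (p d : R -> R) (b : R -> C) dinf lam : notE p d b dinf lam ->
  exists mu, notE p d b dinf mu /\ mu <> lam.
Proof. intros [H1 H2]. destruct (notclD_eps p d b lam H1) as [eps [He Heps]].
assert (K : forall mu, Rabs (mu - lam) <= eps / 2 -> ~ in_clDelta p d b mu).
{ intros mu Hmu Hc. destruct (Hc (eps/2)) as [t [Ht Ht2]]. lra. specialize (Heps t Ht).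
  assert (Rabs (Defs.Delta p d b t - lam) <= Rabs (Defs.Delta p d b t - mu) + Rabs (mu - lam)).
  { replace (Defs.Delta p d b t - lam) with ((Defs.Delta p d b t - mu) + (mu - lam)) by ring. apply Rabs_triang. }
  lra. }
destruct (classic (Finite (lam + eps/4) = dinf)) as [E|E].
- exists (lam + eps/3). split; [split|].
  + apply K. replace (lam + eps/3 - lam) with (eps/3) by ring. rewrite Rabs_right; lra.
  + rewrite <- E. intros E2. injection E2. lra.
  + lra.
- exists (lam + eps/4). split; [split|]; auto.
  + apply K. replace (lam + eps/4 - lam) with (eps/4) by ring. rewrite Rabs_right; lra.
  + lra. Qed.

Lemma clD_of (p d : R -> R) (b : R -> C) lam g : (forall t, 0 <= t -> 0 < p t) ->
  ev (fun t => d t - lam <> 0) -> LL (fun t => pi_f p d b t lam) 0 ->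
  LL (fun t => (d t - lam) / p t) g -> in_clDelta p d b lam.
Proof. intros Hp Hev H1 H2.
assert (H3 : LL (fun t => Defs.Delta p d b t - lam) 0).
{ apply (LL_ext (fun t => (d t - lam) / p t * pi_f p d b t lam)).
  - apply (ev_imp (fun t => d t - lam <> 0 /\ 0 < t)); [|apply ev_and; auto; apply ev_gt].
    intros t [A B]. specialize (Hp t ltac:(lra)). unfold Defs.Delta, pi_f. field. lra.
  - apply (LL_eq _ (g * 0)); [apply LL_mult; auto | ring]. }
intros eps He. destruct (ev_ex _ (LL_small _ H3 eps He) 0) as [t [Ht Ht2]]. exists t; auto. Qed.


Lemma finite_F (p d q : R -> R) (b c : R -> C) r :
  Ck_half 2 p -> Ck_half 2 d -> CCk_half 2 b -> CCk_half 1 c ->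
  (forall t, 0 <= t -> 0 < p t) ->
  is_lim d p_infty (Finite r) ->
  (forall lam, notE p d b (Finite r) lam ->
     ex_finite_lim (fun t => pi_f p d b t lam) p_infty /\
     ex_finite_lim (fun t => Derive (fun s => pi_f p d b s lam) t) p_infty) ->
  (exists lam l, notE p d b (Finite r) lam /\
     is_lim (fun t => pi_f p d b t lam) p_infty (Finite l) /\ l <> 0) ->
  (forall lam, Finite lam <> Finite r ->
     ex_limC (bc_f d b c lam) /\
     ex_limC (fun t => CDerive (bc_f d b c lam) t)) ->
  (forall lam, Finite lam <> Finite r ->
     ex_finite_lim (fun t => q t - lam - (Cmod (c t))^2 / (d t - lam)) p_infty) ->
  exists pinf B Y0 qinf Cc, LL p pinf /\ 0 <= pinf /\ 0 <= B /\ (pinf = 0 -> B <> 0) /\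
    forall lam, sigma_s p q d b c (Finite r) lam <-> (notE p d b (Finite r) lam /\
      0 <= Y0^2 - ((qinf - lam) * (r - lam) - Cc) * (pinf * (r - lam) - B)).
Proof.
intros Hp Hd Hb Hc Hpos Hdl C1 [ls [lv [HnEs [Hls Hlv]]]] C2 C3.
destruct (notE_two _ _ _ _ _ HnEs) as [mu [HnEm Hmu]].
destruct (C1 mu HnEm) as [[a2 Ha2] _].
assert (Hsr : ls <> r) by (intros E; apply (proj2 HnEs); subst; reflexivity).
assert (Hmr : mu <> r) by (intros E; apply (proj2 HnEm); subst; reflexivity).
pose proof (fin_neq d r ls Hdl Hsr) as E1.
pose proof (fin_neq d r mu Hdl Hmr) as E2.
set (B := (lv - a2) * ((r - ls) * (r - mu)) / (mu - ls)).
assert (HB : LL (fun t => Cmod (b t) ^ 2) B).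
{ apply (LL_ext (fun t => (pi_f p d b t ls - pi_f p d b t mu) * ((d t - ls) * (d t - mu)) / (mu - ls))).
  - eapply ev_imp; [|apply (ev_and _ _ E1 E2)]. intros t [A1 A2]. unfold pi_f. field.
    repeat split; auto. lra.
  - lim. all: try neq. unfold B. reflexivity. }
set (pinf := lv + B / (r - ls)).
assert (Hpl : LL p pinf).
{ apply (LL_ext (fun t => pi_f p d b t ls + Cmod (b t) ^ 2 / (d t - ls))).
  - eapply ev_imp; [|apply E1]. intros t A1. unfold pi_f. field. auto.
  - lim. all: try neq. reflexivity. }
destruct (C3 (r+1) ltac:(intros E; injection E; lra)) as [Q1 HQ1].
destruct (C3 (r+2) ltac:(intros E; injection E; lra)) as [Q2 HQ2].
pose proof (fin_neq d r (r+1) Hdl ltac:(lra)) as E3.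
pose proof (fin_neq d r (r+2) Hdl ltac:(lra)) as E4.
set (Cc := (Q1 - Q2 - 1) * ((r - (r+1)) * (r - (r+2)))).
assert (HC : LL (fun t => Cmod (c t) ^ 2) Cc).
{ apply (LL_ext (fun t => ((q t - (r+1) - Cmod (c t) ^ 2 / (d t - (r+1))) -
      (q t - (r+2) - Cmod (c t) ^ 2 / (d t - (r+2))) - 1) * ((d t - (r+1)) * (d t - (r+2))))).
  - eapply ev_imp; [|apply (ev_and _ _ E3 E4)]. intros t [A1 A2]. field. auto.
  - lim. unfold Cc. reflexivity. }
set (qinf := Q1 + (r+1) + Cc / (r - (r+1))).
assert (Hq : LL q qinf).
{ apply (LL_ext (fun t => (q t - (r+1) - Cmod (c t) ^ 2 / (d t - (r+1))) + (r+1) + Cmod (c t) ^ 2 / (d t - (r+1)))).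
  - apply ev_imp with (2 := E3). intros t A. ring.
  - lim. all: try neq. reflexivity. }
destruct (C2 (r+1) ltac:(intros E; injection E; lra)) as [[w [Hw1 Hw2]] _].
set (Y0 := - Im w * (r - (r+1))).
assert (HY : LL (fun t => Im (b t * Cconj (c t))%C) Y0).
{ apply (LL_ext (fun t => - Im (bc_f d b c (r+1) t) * (d t - (r+1)))).
  - apply ev_imp with (2 := E3). intros t A. rewrite bc_im, Y_im. field. auto.
  - lim. reflexivity. }
assert (Hp0 : 0 <= pinf).
{ apply (LL_le p); auto. apply ev_imp with (2 := ev_gt 0). intros t Ht. left; apply Hpos; lra. }
assert (HB0 : 0 <= B).
{ apply (LL_le (fun t => Cmod (b t) ^ 2)); auto. apply ev_imp with (2 := ev_gt 0). intros t _. apply pow2_ge_0. }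
assert (Hlv2 : lv = pinf - B / (r - ls)).
{ apply (LL_uniq (fun t => pi_f p d b t ls)); [exact Hls|]. unfold pi_f. apply LL_minus; [exact Hpl| apply LL_div; [exact HB| apply LL_minus; [exact Hdl| apply LL_const]| neq]]. }
assert (HBn : pinf = 0 -> B <> 0).
{ intros E EB. apply Hlv. rewrite Hlv2, E, EB. unfold Rdiv. ring. }
clearbody B pinf Cc qinf Y0.
assert (Hchar : forall lam, notE p d b (Finite r) lam -> (sigma_s p q d b c (Finite r) lam <->
   0 <= Y0^2 - ((qinf - lam) * (r - lam) - Cc) * (pinf * (r - lam) - B))).
{ intros lam HnE.
  assert (Hlr : lam <> r) by (intros E; apply (proj2 HnE); subst; reflexivity).
  pose proof (fin_neq d r lam Hdl Hlr) as Ev.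
  assert (Ha : LL (fun t => pi_f p d b t lam) (pinf - B / (r - lam))).
  { unfold pi_f. apply LL_minus; [exact Hpl| apply LL_div; [exact HB| apply LL_minus; [exact Hdl| apply LL_const]| neq]]. }
  assert (Ha0 : pinf - B / (r - lam) <> 0).
  { destruct (Req_dec pinf 0) as [E|E].
    - rewrite E. intros H0. apply (HBn E). assert (B = - (0 - B / (r - lam)) * (r - lam)) by (field; neq).
      rewrite H, H0. ring.
    - intros H0. apply (proj1 HnE). apply (clD_of p d b lam ((r - lam) / pinf)); auto.
      rewrite <- H0; auto. apply LL_div; [apply LL_minus; [exact Hdl|apply LL_const]| exact Hpl| auto]. }
  assert (Hal : LL (fun t => - 2 * Im (b t * Cconj (c t))%C / (d t - lam)) (-2 * Y0 / (r - lam))).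
  { apply LL_div; [apply LL_mult; [apply LL_const| exact HY]| apply LL_minus; [exact Hdl|apply LL_const]| neq]. }
  assert (Hk : LL (fun t => q t - lam - (Cmod (c t))^2 / (d t - lam)) (qinf - lam - Cc / (r - lam))).
  { apply LL_minus; [apply LL_minus; [exact Hq| apply LL_const]| apply LL_div; [exact HC| apply LL_minus; [exact Hdl|apply LL_const]| neq]]. }
  rewrite (sigma_char p d q b c (Finite r) lam _ _ _ Hp Hd Hb Hc C1 C2 HnE Ev Ha Ha0 Hal Hk).
  replace (Y0^2 - ((qinf - lam) * (r - lam) - Cc) * (pinf * (r - lam) - B)) with
    (((r - lam)^2 / 4) * (-2 * Y0 / (r - lam) * (-2 * Y0 / (r - lam)) - 4 * (qinf - lam - Cc / (r - lam)) * (pinf - B / (r - lam))))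
    by (field; neq).
  rewrite pos_mult_le. reflexivity. assert (Hn : r - lam <> 0) by neq.
  apply Rdiv_lt_0_compat; [|lra]. rewrite <- Rsqr_pow2. apply Rsqr_pos_lt; auto. }
exists pinf, B, Y0, qinf, Cc. split; [auto|split; [auto|split; [auto|split; [auto|]]]].
intros lam. split.
- intros H. split. exact (proj1 H). apply Hchar; auto. exact (proj1 H).
- intros [HnE HF]. apply Hchar; auto.
Qed.


Lemma finite_case (p d q : R -> R) (b c : R -> C) r :
  Ck_half 2 p -> Ck_half 2 d -> CCk_half 2 b -> CCk_half 1 c ->
  (forall t, 0 <= t -> 0 < p t) ->
  is_lim d p_infty (Finite r) ->
  (forall lam, notE p d b (Finite r) lam ->
     ex_finite_lim (fun t => pi_f p d b t lam) p_infty /\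
     ex_finite_lim (fun t => Derive (fun s => pi_f p d b s lam) t) p_infty) ->
  (exists lam l, notE p d b (Finite r) lam /\
     is_lim (fun t => pi_f p d b t lam) p_infty (Finite l) /\ l <> 0) ->
  (forall lam, Finite lam <> Finite r ->
     ex_limC (bc_f d b c lam) /\
     ex_limC (fun t => CDerive (bc_f d b c lam) t)) ->
  (forall lam, Finite lam <> Finite r ->
     ex_finite_lim (fun t => q t - lam - (Cmod (c t))^2 / (d t - lam)) p_infty) ->
  exists sm sp s : R, sm <= sp <= s /\
     (forall l : Rbar, is_lim p p_infty l -> Rbar_lt (Finite 0) l ->
        (forall lam, sigma_s p q d b c (Finite r) lam <->
           (((sm <= lam <= sp) \/ s <= lam) /\ notE p d b (Finite r) lam))
        \/
        (forall lam, sigma_s p q d b c (Finite r) lam <->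
           (s <= lam /\ notE p d b (Finite r) lam))) /\
     (is_lim p p_infty (Finite 0) ->
        forall lam, sigma_s p q d b c (Finite r) lam <->
          ((lam <= sm \/ sp <= lam) /\ notE p d b (Finite r) lam)).
Proof. intros Hp Hd Hb Hc Hpos Hdl C1 C1e C2 C3.
destruct (finite_F p d q b c r Hp Hd Hb Hc Hpos Hdl C1 C1e C2 C3) as
  [pinf [B [Y0 [qinf [Cc [Hpl [Hp0 [HB0 [HBn Hch]]]]]]]]].
destruct (Rle_lt_or_eq_dec 0 pinf Hp0) as [Hpp|Hpz].
- set (e := qinf - r). set (A3 := pinf). set (A2 := e * pinf - B). set (A1 := - Cc * pinf - e * B).
  set (A0 := Cc * B).
  destruct (cubic_set A3 (-(3 * r * A3 + A2)) (3 * r^2 * A3 + 2 * r * A2 + A1)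
     (Y0^2 - (A3 * r^3 + A2 * r^2 + A1 * r + A0)) Hpp) as [sm [sp [s [Hs Hset]]]].
  exists sm, sp, s. split; auto. split.
  + intros l Hl Hl0. left. intros lam. rewrite Hch. rewrite <- Hset.
    replace (A3 * lam ^ 3 + - (3 * r * A3 + A2) * lam ^ 2 + (3 * r ^ 2 * A3 + 2 * r * A2 + A1) * lam +
      (Y0 ^ 2 - (A3 * r ^ 3 + A2 * r ^ 2 + A1 * r + A0))) with
      (Y0 ^ 2 - ((qinf - lam) * (r - lam) - Cc) * (pinf * (r - lam) - B))
    by (unfold A3, A2, A1, A0, e; ring). tauto.
  + intros Hl. exfalso. pose proof (LL_uniq _ _ _ Hpl Hl). lra.
- assert (HBp : 0 < B) by (destruct HB0 as [H|H]; auto; exfalso; apply (HBn (eq_sym Hpz)); auto).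
  destruct (quad_pos_set B (- B * (qinf + r)) (Y0^2 + B * (qinf * r - Cc)) HBp) as [sm [sp [Hs Hset]]].
  exists sm, sp, sp. split; [lra|]. split.
  + intros l Hl Hl0. exfalso. rewrite (lim_uniqR p l pinf Hl Hpl) in Hl0. simpl in Hl0. lra.
  + intros Hl lam. rewrite Hch. rewrite <- Hset.
    replace (B * lam * lam + - B * (qinf + r) * lam + (Y0 ^ 2 + B * (qinf * r - Cc))) with
      (Y0 ^ 2 - ((qinf - lam) * (r - lam) - Cc) * (pinf * (r - lam) - B))
    by (rewrite <- Hpz; ring). tauto.
Qed.


Lemma notE_inf (p d : R -> R) (b : R -> C) dinf lam : infty dinf ->
  (notE p d b dinf lam <-> ~ in_clDelta p d b lam).
Proof. intros [H|H]; subst; unfold notE; split; try tauto; intros; split; auto; discriminate. Qed.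

Lemma gen_ratio (g d : R -> R) dinf x0 y0 K : is_lim d p_infty dinf -> infty dinf ->
  LL (fun t => g t / ((d t - x0) * (d t - y0))) K ->
  forall x y, LL (fun t => g t / ((d t - x) * (d t - y))) K.
Proof. intros Hd Hi H x y.
apply (LL_ext (fun t => g t / ((d t - x0) * (d t - y0)) * ((d t - x0) / (d t - x)) * ((d t - y0) / (d t - y)))).
- apply (ev_imp (fun t => (d t - x0 <> 0 /\ d t - y0 <> 0) /\ (d t - x <> 0 /\ d t - y <> 0))).
  intros t [[A1 A2] [A3 A4]]. field. tauto.
  apply ev_and; apply ev_and; apply (inf_neq d dinf); auto.
- apply (LL_eq _ (K * 1 * 1)); [|ring]. apply LL_mult; [apply LL_mult|]; auto; apply (inf_ratio d dinf); auto. Qed.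

Lemma inf_F (p d q : R -> R) (b c : R -> C) dinf :
  Ck_half 2 p -> Ck_half 2 d -> CCk_half 2 b -> CCk_half 1 c ->
  (forall t, 0 <= t -> 0 < p t) ->
  is_lim d p_infty dinf -> infty dinf ->
  (forall lam, notE p d b dinf lam ->
     ex_finite_lim (fun t => pi_f p d b t lam) p_infty /\
     ex_finite_lim (fun t => Derive (fun s => pi_f p d b s lam) t) p_infty) ->
  (exists lam l, notE p d b dinf lam /\
     is_lim (fun t => pi_f p d b t lam) p_infty (Finite l) /\ l <> 0) ->
  (forall lam, Finite lam <> dinf ->
     ex_limC (bc_f d b c lam) /\
     ex_limC (fun t => CDerive (bc_f d b c lam) t)) ->
  (forall lam, Finite lam <> dinf ->
     ex_finite_lim (fun t => q t - lam - (Cmod (c t))^2 / (d t - lam)) p_infty) ->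
  exists L P K Q1 Iw, LL (fun t => (Cmod (b t))^2 / (d t)^2) L /\
    LL (fun t => p t - (Cmod (b t))^2 / d t) P /\ 0 <= L /\ 0 <= K /\ (L = 0 -> P <> 0) /\
    (dinf = m_infty -> 0 <= P) /\
    forall lam, sigma_s p q d b c dinf lam <-> (~ in_clDelta p d b lam /\
      0 <= Iw^2 - (Q1 - (1 + K) * lam) * (P - L * lam)).
Proof.
intros Hp Hd Hb Hc Hpos Hdl Hinf C1 [ls [lv [HnEs [Hls Hlv]]]] C2 C3.
assert (Hne : forall x, Finite x <> dinf) by (intros x E; destruct Hinf; subst; discriminate).
destruct (notE_two _ _ _ _ _ HnEs) as [mu [HnEm Hmu]].
destruct (C1 mu HnEm) as [[a2 Ha2] _].
pose proof (inf_neq d dinf ls Hdl Hinf) as E1.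
pose proof (inf_neq d dinf mu Hdl Hinf) as E2.
set (L := (lv - a2) / (mu - ls)).
assert (HL0 : LL (fun t => Cmod (b t) ^ 2 / ((d t - ls) * (d t - mu))) L).
{ apply (LL_ext (fun t => (pi_f p d b t ls - pi_f p d b t mu) / (mu - ls))).
  - eapply ev_imp; [|apply (ev_and _ _ E1 E2)]. intros t [A1 A2]. unfold pi_f. field.
    repeat split; auto. neq.
  - apply LL_div; [apply LL_minus; auto| apply LL_const| neq]. }
pose proof (gen_ratio _ d dinf ls mu L Hdl Hinf HL0) as HL.
clearbody L.
set (P := lv + L * ls).
assert (Hpi : forall lam, LL (fun t => pi_f p d b t lam) (P - L * lam)).
{ intros lam. apply (LL_ext (fun t => pi_f p d b t ls + (ls - lam) * (Cmod (b t) ^ 2 / ((d t - lam) * (d t - ls))))).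
  - apply (ev_imp (fun t => d t - ls <> 0 /\ d t - lam <> 0)); [|apply ev_and; auto; apply (inf_neq d dinf); auto].
    intros t [A1 A2]. unfold pi_f. field. repeat split; neq.
  - apply (LL_eq _ (lv + (ls - lam) * L)); [|unfold P; ring]. apply LL_plus; auto. apply LL_mult; auto. apply LL_const. }
assert (HPl : LL (fun t => p t - (Cmod (b t))^2 / d t) P).
{ apply (LL_ext (fun t => pi_f p d b t ls + ls * (Cmod (b t) ^ 2 / ((d t - 0) * (d t - ls))))).
  - apply (ev_imp (fun t => d t - ls <> 0 /\ d t - 0 <> 0)); [|apply ev_and; auto; apply (inf_neq d dinf); auto].
    intros t [A1 A2]. unfold pi_f. field. split; auto. lra.
  - apply (LL_eq _ (lv + ls * L)); [|unfold P; ring]. apply LL_plus; auto. apply LL_mult; auto. apply LL_const. }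
assert (HLd : LL (fun t => (Cmod (b t))^2 / (d t)^2) L).
{ apply (LL_ext (fun t => Cmod (b t) ^ 2 / ((d t - 0) * (d t - 0)))).
  - apply ev_imp with (2 := ev_gt 0). intros t _. f_equal. ring.
  - apply HL. }
assert (HL0p : 0 <= L).
{ apply (LL_le (fun t => Cmod (b t) ^ 2 / ((d t - ls) * (d t - mu)))); auto.
  eapply ev_imp; [|apply (inf_sign d dinf ls mu Hdl Hinf)]. intros t Ht.
  apply Rdiv_le_0_compat; auto. apply pow2_ge_0. }
destruct (C3 0 (Hne 0)) as [Q1 HQ1].
destruct (C3 1 (Hne 1)) as [Q2 HQ2].
pose proof (inf_neq d dinf 0 Hdl Hinf) as E3.
pose proof (inf_neq d dinf 1 Hdl Hinf) as E4.
set (K := Q1 - Q2 - 1).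
assert (HK0 : LL (fun t => Cmod (c t) ^ 2 / ((d t - 0) * (d t - 1))) K).
{ apply (LL_ext (fun t => (q t - 0 - Cmod (c t) ^ 2 / (d t - 0)) - (q t - 1 - Cmod (c t) ^ 2 / (d t - 1)) - 1)).
  - eapply ev_imp; [|apply (ev_and _ _ E3 E4)]. intros t [A1 A2]. field. repeat split; neq.
  - apply LL_minus; [apply LL_minus; auto| apply LL_const]. }
pose proof (gen_ratio _ d dinf 0 1 K Hdl Hinf HK0) as HK.
clearbody K.
assert (HKp : 0 <= K).
{ apply (LL_le (fun t => Cmod (c t) ^ 2 / ((d t - 0) * (d t - 1)))); auto.
  eapply ev_imp; [|apply (inf_sign d dinf 0 1 Hdl Hinf)]. intros t Ht.
  apply Rdiv_le_0_compat; auto. apply pow2_ge_0. }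
assert (HQ : forall lam, LL (fun t => q t - lam - (Cmod (c t))^2 / (d t - lam)) (Q1 - (1 + K) * lam)).
{ intros lam. apply (LL_ext (fun t => (q t - 0 - Cmod (c t) ^ 2 / (d t - 0)) - lam - lam * (Cmod (c t) ^ 2 / ((d t - lam) * (d t - 0))))).
  - apply (ev_imp (fun t => d t - 0 <> 0 /\ d t - lam <> 0)); [|apply ev_and; auto; apply (inf_neq d dinf); auto].
    intros t [A1 A2]. field. repeat split; neq.
  - apply (LL_eq _ (Q1 - lam - lam * K)); [|ring]. apply LL_minus; [apply LL_minus; auto; apply LL_const|].
    apply LL_mult; auto. apply LL_const. }
destruct (C2 0 (Hne 0)) as [[w [Hw1 Hw2]] _].
set (Iw := Im w).
assert (HY : forall lam, LL (fun t => - 2 * Im (b t * Cconj (c t))%C / (d t - lam)) (2 * Iw)).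
{ intros lam. apply (LL_ext (fun t => 2 * Im (bc_f d b c 0 t) * ((d t - 0) / (d t - lam)))).
  - apply (ev_imp (fun t => d t - 0 <> 0 /\ d t - lam <> 0)); [|apply ev_and; auto; apply (inf_neq d dinf); auto].
    intros t [A1 A2]. rewrite bc_im, Y_im. field. repeat split; neq.
  - apply (LL_eq _ (2 * Iw * 1)); [|ring]. apply LL_mult; [apply LL_mult; [apply LL_const| exact Hw2]|].
    apply (inf_ratio d dinf); auto. }
assert (Hlv2 : lv = P - L * ls) by (apply (LL_uniq (fun t => pi_f p d b t ls)); auto).
assert (HPn : L = 0 -> P <> 0).
{ intros E EP. apply Hlv. rewrite Hlv2, E, EP. ring. }
assert (HPm : dinf = m_infty -> 0 <= P).
{ intros Em. assert (Hneg : ev (fun t => d t < 0)).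
  { subst dinf. specialize (Hdl (fun y => y < 0)). apply Hdl. exists 0. auto. }
  apply (LL_le (fun t => p t - (Cmod (b t))^2 / d t)); [|exact HPl].
  apply (ev_imp (fun t => 0 < t /\ d t < 0)); [|apply (ev_and _ _ (ev_gt 0) Hneg)].
  intros t [A1 A2]. specialize (Hpos t ltac:(lra)).
  assert (0 <= - (Cmod (b t) ^ 2 / d t)).
  { unfold Rdiv. rewrite Ropp_mult_distr_r, <- Rinv_opp. apply Rmult_le_pos. apply pow2_ge_0.
    left. apply Rinv_0_lt_compat. lra. }
  lra. }
clearbody P Iw.
exists L, P, K, Q1, Iw. split; [auto|split; [auto|split; [auto|split; [auto|split; [auto|split; [auto|]]]]]].
assert (Hchar : forall lam, ~ in_clDelta p d b lam -> (sigma_s p q d b c dinf lam <->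
   0 <= Iw^2 - (Q1 - (1 + K) * lam) * (P - L * lam))).
{ intros lam Hcl.
  assert (HnE : notE p d b dinf lam) by (apply notE_inf; auto).
  pose proof (inf_neq d dinf lam Hdl Hinf) as Ev.
  assert (Ha0 : P - L * lam <> 0).
  { destruct (Req_dec L 0) as [E|E].
    - rewrite E. replace (P - 0 * lam) with P by ring. auto.
    - intros H0. apply Hcl. apply (clD_of p d b lam (/ L)); auto.
      + rewrite <- H0. auto.
      + apply (LL_ext (fun t => / (pi_f p d b t lam * / (d t - lam) + Cmod (b t) ^ 2 / ((d t - lam) * (d t - lam))))).
        * apply (ev_imp (fun t => 0 < t /\ d t - lam <> 0)); [|apply ev_and; auto; apply ev_gt].
          intros t [A1 A2]. specialize (Hpos t ltac:(lra)). unfold pi_f. field. split; [lra|split; [auto|]]. replace (p t * (d t - lam) - Cmod (b t) ^ 2 + Cmod (b t) ^ 2) with (p t * (d t - lam)) by ring. apply Rmult_integral_contrapositive; split; [lra|auto].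
        * apply (LL_eq _ (/ ((P - L * lam) * 0 + L))); [|f_equal; ring].
          apply LL_inv; [|replace ((P - L * lam) * 0 + L) with L by ring; auto].
          apply LL_plus; [apply LL_mult; auto; apply (inf_inv d dinf); auto| apply HL]. }
  rewrite (sigma_char p d q b c dinf lam _ _ _ Hp Hd Hb Hc C1 C2 HnE Ev (Hpi lam) Ha0 (HY lam) (HQ lam)).
  replace (2 * Iw * (2 * Iw) - 4 * (Q1 - (1 + K) * lam) * (P - L * lam)) with
    (4 * (Iw^2 - (Q1 - (1 + K) * lam) * (P - L * lam))) by ring.
  rewrite pos_mult_le; [reflexivity| lra]. }
intros lam. split.
- intros H. assert (Hcl : ~ in_clDelta p d b lam) by (apply (proj1 (notE_inf p d b dinf lam Hinf)); exact (proj1 H)).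
  split; auto. apply Hchar; auto.
- intros [Hcl HF]. apply Hchar; auto.
Qed.


Lemma inf_case (p d q : R -> R) (b c : R -> C) dinf :
  Ck_half 2 p -> Ck_half 2 d -> CCk_half 2 b -> CCk_half 1 c ->
  (forall t, 0 <= t -> 0 < p t) ->
  is_lim d p_infty dinf -> infty dinf ->
  (forall lam, notE p d b dinf lam ->
     ex_finite_lim (fun t => pi_f p d b t lam) p_infty /\
     ex_finite_lim (fun t => Derive (fun s => pi_f p d b s lam) t) p_infty) ->
  (exists lam l, notE p d b dinf lam /\
     is_lim (fun t => pi_f p d b t lam) p_infty (Finite l) /\ l <> 0) ->
  (forall lam, Finite lam <> dinf ->
     ex_limC (bc_f d b c lam) /\
     ex_limC (fun t => CDerive (bc_f d b c lam) t)) ->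
  (forall lam, Finite lam <> dinf ->
     ex_finite_lim (fun t => q t - lam - (Cmod (c t))^2 / (d t - lam)) p_infty) ->
  exists sm sp s : R, sm <= sp <= s /\
     (forall l : Rbar,
        is_lim (fun t => (Cmod (b t))^2 / (d t)^2) p_infty l ->
        Rbar_lt (Finite 0) l ->
        forall lam, sigma_s p q d b c dinf lam <->
          (sm <= lam <= sp /\ ~ in_clDelta p d b lam)) /\
     (forall l : Rbar,
        is_lim (fun t => (Cmod (b t))^2 / (d t)^2) p_infty (Finite 0) ->
        is_lim (fun t => p t - (Cmod (b t))^2 / d t) p_infty l ->
        Rbar_lt (Finite 0) l ->
        forall lam, sigma_s p q d b c dinf lam <->
          (s <= lam /\ ~ in_clDelta p d b lam)) /\
     (forall l : Rbar,
        is_lim (fun t => (Cmod (b t))^2 / (d t)^2) p_infty (Finite 0) ->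
        is_lim (fun t => p t - (Cmod (b t))^2 / d t) p_infty l ->
        Rbar_lt l (Finite 0) ->
        forall lam, sigma_s p q d b c dinf lam <->
          (lam <= s /\ ~ in_clDelta p d b lam)) /\
     (dinf = m_infty ->
        is_lim (fun t => (Cmod (b t))^2 / (d t)^2) p_infty (Finite 0) ->
        forall lam, sigma_s p q d b c dinf lam <->
          (s <= lam /\ ~ in_clDelta p d b lam)).
Proof. intros Hp Hd Hb Hc Hpos Hdl Hinf C1 C1e C2 C3.
destruct (inf_F p d q b c dinf Hp Hd Hb Hc Hpos Hdl Hinf C1 C1e C2 C3) as
  [L [P [K [Q1 [Iw [HLd [HPl [HL0 [HK0 [HPn [HPm Hch]]]]]]]]]]].
assert (EF : forall lam, Iw^2 - (Q1 - (1 + K) * lam) * (P - L * lam) =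
   (-(1+K)*L) * lam * lam + ((1+K)*P + L*Q1) * lam + (Iw^2 - Q1 * P)) by (intros; ring).
destruct HL0 as [HLp|HLz].
- assert (Ha : -(1+K)*L < 0) by (assert (0 < (1+K)*L) by (apply Rmult_lt_0_compat; lra); lra).
  assert (Hno : forall l : R, LL (fun t => (Cmod (b t))^2 / (d t)^2) l -> l = 0 -> False).
  { intros l Hl E. pose proof (LL_uniq _ _ _ HLd Hl). lra. }
  destruct (quad_neg_set (-(1+K)*L) ((1+K)*P + L*Q1) (Iw^2 - Q1 * P) Ha) as [[sm [sp [Hs Hset]]]|Hneg].
  + exists sm, sp, sp. split; [lra|]. split; [|split; [|split]].
    * intros l Hl Hl0 lam. rewrite Hch, EF, Hset. tauto.
    * intros l Hl. exfalso. apply (Hno 0 Hl); auto.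
    * intros l Hl. exfalso. apply (Hno 0 Hl); auto.
    * intros _ Hl. exfalso. apply (Hno 0 Hl); auto.
  + set (D0 := Defs.Delta p d b 0).
    exists D0, D0, D0. split; [lra|]. split; [|split; [|split]].
    * intros l Hl Hl0 lam. rewrite Hch, EF. split.
      -- intros [_ H]. pose proof (Hneg lam). lra.
      -- intros [H1 H2]. exfalso. apply H2. intros eps He. exists 0. split; [lra|].
         replace lam with D0 by lra. unfold D0. rewrite Rminus_diag, Rabs_R0. auto.
    * intros l Hl. exfalso. apply (Hno 0 Hl); auto.
    * intros l Hl. exfalso. apply (Hno 0 Hl); auto.
    * intros _ Hl. exfalso. apply (Hno 0 Hl); auto.
- subst L. assert (HPn0 := HPn eq_refl).
  set (s0 := (Q1 * P - Iw^2) / ((1 + K) * P)).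
  assert (EF2 : forall lam, Iw^2 - (Q1 - (1 + K) * lam) * (P - 0 * lam) = ((1+K) * P) * (lam - s0)).
  { intros lam. unfold s0. field. split; auto. lra. }
  assert (Pos : 0 < P -> forall lam, (0 <= Iw^2 - (Q1 - (1 + K) * lam) * (P - 0 * lam) <-> s0 <= lam)).
  { intros HP lam. rewrite EF2, pos_mult_le. lra. apply Rmult_lt_0_compat; lra. }
  assert (Neg : P < 0 -> forall lam, (0 <= Iw^2 - (Q1 - (1 + K) * lam) * (P - 0 * lam) <-> lam <= s0)).
  { intros HP lam. rewrite EF2. replace ((1 + K) * P * (lam - s0)) with ((-((1+K)*P)) * (s0 - lam)) by ring.
    rewrite pos_mult_le. lra. assert (0 < (1+K) * (-P)) by (apply Rmult_lt_0_compat; lra). lra. }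
  exists s0, s0, s0. split; [lra|]. split; [|split; [|split]].
  + intros l Hl Hl0. exfalso. rewrite (lim_uniqR _ l 0 Hl HLd) in Hl0. simpl in Hl0. lra.
  + intros l _ Hl Hl0 lam. rewrite (lim_uniqR _ l P Hl HPl) in Hl0. simpl in Hl0.
    rewrite Hch, Pos; auto. tauto.
  + intros l _ Hl Hl0 lam. rewrite (lim_uniqR _ l P Hl HPl) in Hl0. simpl in Hl0.
    rewrite Hch, Neg; auto. tauto.
  + intros Em _ lam. assert (0 < P) by (pose proof (HPm Em); destruct H; auto; congruence).
    rewrite Hch, Pos; auto. tauto.
Qed.

Theorem proposition5p3
  (p d q : R -> R) (b c : R -> C) (dinf : Rbar) (beta gamma : R) :
  Ck_half 2 p -> Ck_half 2 d -> CCk_half 2 b -> CCk_half 1 c -> Ck_half 0 q ->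
  (forall t, 0 <= t -> 0 < p t) ->
  (* (B1) *)
  is_lim d p_infty dinf ->
  (* (B2) *)
  0 < beta -> 0 < gamma ->
  (forall t, 0 <= t -> Cmod (b t) <= beta * (Rabs (d t) + 1)) ->
  (forall t, 0 <= t -> Cmod (c t) <= gamma * (Rabs (d t) + 1)) ->
  (* (C1) *)
  (forall lam, notE p d b dinf lam ->
     ex_finite_lim (fun t => pi_f p d b t lam) p_infty /\
     ex_finite_lim (fun t => Derive (fun s => pi_f p d b s lam) t) p_infty) ->
  (exists lam l, notE p d b dinf lam /\
     is_lim (fun t => pi_f p d b t lam) p_infty (Finite l) /\ l <> 0) ->
  (* (C2) *)
  (forall lam, Finite lam <> dinf ->
     ex_limC (bc_f d b c lam) /\
     ex_limC (fun t => CDerive (bc_f d b c lam) t)) ->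
  (* (C3) *)
  (forall lam, Finite lam <> dinf ->
     ex_finite_lim (fun t => q t - lam - (Cmod (c t))^2 / (d t - lam)) p_infty) ->
  exists sm sp s : R, sm <= sp <= s /\
  (* (i) *)
  (forall r, dinf = Finite r ->
     (forall l : Rbar, is_lim p p_infty l -> Rbar_lt (Finite 0) l ->
        (forall lam, sigma_s p q d b c dinf lam <->
           (((sm <= lam <= sp) \/ s <= lam) /\ notE p d b dinf lam))
        \/
        (forall lam, sigma_s p q d b c dinf lam <->
           (s <= lam /\ notE p d b dinf lam))) /\
     (is_lim p p_infty (Finite 0) ->
        forall lam, sigma_s p q d b c dinf lam <->
          ((lam <= sm \/ sp <= lam) /\ notE p d b dinf lam))) /\
  (* (ii) *)
  (dinf = p_infty ->
     (forall l : Rbar,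
        is_lim (fun t => (Cmod (b t))^2 / (d t)^2) p_infty l ->
        Rbar_lt (Finite 0) l ->
        forall lam, sigma_s p q d b c dinf lam <->
          (sm <= lam <= sp /\ ~ in_clDelta p d b lam)) /\
     (forall l : Rbar,
        is_lim (fun t => (Cmod (b t))^2 / (d t)^2) p_infty (Finite 0) ->
        is_lim (fun t => p t - (Cmod (b t))^2 / d t) p_infty l ->
        Rbar_lt (Finite 0) l ->
        forall lam, sigma_s p q d b c dinf lam <->
          (s <= lam /\ ~ in_clDelta p d b lam)) /\
     (forall l : Rbar,
        is_lim (fun t => (Cmod (b t))^2 / (d t)^2) p_infty (Finite 0) ->
        is_lim (fun t => p t - (Cmod (b t))^2 / d t) p_infty l ->
        Rbar_lt l (Finite 0) ->
        forall lam, sigma_s p q d b c dinf lam <->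
          (lam <= s /\ ~ in_clDelta p d b lam))) /\
  (* (iii) *)
  (dinf = m_infty ->
     (forall l : Rbar,
        is_lim (fun t => (Cmod (b t))^2 / (d t)^2) p_infty l ->
        Rbar_lt (Finite 0) l ->
        forall lam, sigma_s p q d b c dinf lam <->
          (sm <= lam <= sp /\ ~ in_clDelta p d b lam)) /\
     (is_lim (fun t => (Cmod (b t))^2 / (d t)^2) p_infty (Finite 0) ->
        forall lam, sigma_s p q d b c dinf lam <->
          (s <= lam /\ ~ in_clDelta p d b lam))).
Proof.
intros Hp Hd Hb Hc Hq Hpos Hdl _ _ _ _ C1 C1e C2 C3.
destruct dinf as [r| |].
- destruct (finite_case p d q b c r Hp Hd Hb Hc Hpos Hdl C1 C1e C2 C3) as [sm [sp [s [Hs [H1 H2]]]]].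
  exists sm, sp, s. split; auto. split; [|split].
  + intros r0 E. injection E as E. subst r0. split; auto.
  + intros E; discriminate.
  + intros E; discriminate.
- destruct (inf_case p d q b c p_infty Hp Hd Hb Hc Hpos Hdl (or_introl eq_refl) C1 C1e C2 C3)
    as [sm [sp [s [Hs [H1 [H2 [H3 H4]]]]]]].
  exists sm, sp, s. split; auto. split; [|split].
  + intros r0 E; discriminate.
  + intros _. auto.
  + intros E; discriminate.
- destruct (inf_case p d q b c m_infty Hp Hd Hb Hc Hpos Hdl (or_intror eq_refl) C1 C1e C2 C3)
    as [sm [sp [s [Hs [H1 [H2 [H3 H4]]]]]]].
  exists sm, sp, s. split; auto. split; [|split].
  + intros r0 E; discriminate.
  + intros E; discriminate.
  + intros _. split; auto.
Qed.
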